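(* Let $G$ be a second countable locally compact abelian group, $\varLambda\subseteq G$ uniformly discrete, $\mathcal{A}=(A_n)_n$ a van Hove sequence, and $F_n=\varLambda\cap A_n$. (a) If the density autocorrelation $\gamma_{\mathrm{dens}}$ of $\varLambda$ exists with respect to $\mathcal{A}$, then the density $\mathrm{dens}_{\mathcal{A}}(\varLambda)=\lim_n\frac{\mathrm{card}(F_n)}{\mathrm{vol}(A_n)}$ exists and $\gamma_{\mathrm{dens}}(\{0\})=\mathrm{dens}_{\mathcal{A}}(\varLambda)$. (b) If the counting autocorrelation $\gamma_{\mathrm{count}}$ exists with respect to $\mathcal{A}$, then the following are equivalent: (i) $\gamma_{\mathrm{count}}(\{0\})=1$; (ii) $(F_n)_n$ contains a subsequence of nonempty sets; (iii) there exists $N$ such that $F_n\ne\emptyset$ for all $n>N$; (iv) $\gamma_{\mathrm{count}}\ne0$.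
   Context: $\mathrm{vol}$ is Haar measure. Uniformly discrete: there is a nonempty open $U$ such that each $t+U$ meets $\varLambda$ in at most one point. A van Hove sequence is a sequence of compact sets $A_n$ of positive Haar measure with $\mathrm{vol}(\partial^K A_n)/\mathrm{vol}(A_n)\to0$ for all compact $K$, where $\partial^K A=((A+K)\setminus A^\circ)\cup((\overline{G\setminus A}-K)\cap A)$. For finite $F$, $\gamma_F=\frac{1}{\mathrm{card}(F)}\sum_{x,y\in F}\delta_{x-y}$ if $F\ne\emptyset$, $\gamma_\emptyset=0$; $\gamma_n=\frac{1}{\mathrm{vol}(A_n)}\sum_{x,y\in F_n}\delta_{x-y}$. The density (resp. counting) autocorrelation is the vague limit of $\gamma_n$ (resp. $\gamma_{F_n}$). *)

(* Defs.v *)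
From HB Require Import structures.
From mathcomp Require Import all_boot all_algebra.
From mathcomp Require Import finmap all_classical all_reals all_analysis.
Set Implicit Arguments. Unset Strict Implicit. Unset Printing Implicit Defensive.
Import GRing.Theory Num.Theory numFieldTopology.Exports numFieldNormedType.Exports.
Local Open Scope classical_set_scope.
Local Open Scope ring_scope.

(* Carrier of an abelian topological group; the (arbitrary) point is only
   needed so that the Borel sigma-algebra gives a measurableType. *)
Definition ptd (G : topologicalZmodType) : Type := G.
HB.instance Definition _ (G : topologicalZmodType) := Choice.on (ptd G).
HB.instance Definition _ (G : topologicalZmodType) :=
  isPointed.Build (ptd G) 0.
Definition borel_open (G : topologicalZmodType) : set (set (ptd G)) :=
  @open G.

Notation borel G := (g_sigma_algebraType (@borel_open G)).

Section Defs.
Context {R : realType} {G : topologicalZmodType}.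

Definition haar_measure (vol : {measure set (borel G) -> \bar R}) :=
  [/\ forall (B : set G) (t : G), measurable (B : set (borel G)) ->
        vol ([set t + b | b in B] : set (borel G)) = vol B,
      forall K : set G, compact K -> (vol K < +oo)%E &
      forall U : set G, open U -> U !=set0 -> (0 < vol U)%E].

Definition locally_finite (mu : {measure set (borel G) -> \bar R}) :=
  forall K : set G, compact K -> (mu K < +oo)%E.

Definition uniformly_discrete (L : set G) :=
  exists U : set G, [/\ open U, U !=set0 &
    forall (t x y : G), L x -> L y ->
      [set t + u | u in U] x -> [set t + u | u in U] y -> x = y].

Definition setadd (A K : set G) : set G := [set a + k | a in A & k in K].
Definition setsub (A K : set G) : set G := [set a - k | a in A & k in K].

Definition kboundary (K A : set G) : set G :=
  (setadd A K `\` interior A) `|` (setsub (closure (~` A)) K `&` A).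

Definition van_hove (vol : {measure set (borel G) -> \bar R})
    (A : nat -> set G) :=
  (forall n, compact (A n) /\ (0 < vol (A n))%E) /\
  (forall K : set G, compact K ->
     (fine (vol (kboundary K (A n))) / fine (vol (A n))) @[n --> \oo] --> 0).

Definition cardR (F : set G) : R := (#|` fset_set F |)%fset%:R.

Definition Cc (f : G -> R) :=
  continuous f /\ exists K : set G, compact K /\ forall x, ~ K x -> f x = 0.

(* pairing of f with gamma_n = 1/vol(A_n) sum_{x,y in F_n} delta_{x-y} *)
Definition gamma_dens (vol : {measure set (borel G) -> \bar R})
    (L : set G) (A : nat -> set G) (n : nat) (f : G -> R) : R :=
  (\sum_(x \in L `&` A n) \sum_(y \in L `&` A n) f (x - y)) / fine (vol (A n)).

(* pairing of f with gamma_{F_n}; gamma_emptyset = 0 *)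
Definition gamma_count (L : set G) (A : nat -> set G) (n : nat)
    (f : G -> R) : R :=
  if asbool (L `&` A n = set0) then 0 else
  (\sum_(x \in L `&` A n) \sum_(y \in L `&` A n) f (x - y)) / cardR (L `&` A n).

(* vague convergence of the sequence of measures (given by their pairings
   with test functions) to the Borel measure gamma *)
Definition vague_limit (gn : nat -> (G -> R) -> R)
    (gamma : {measure set (borel G) -> \bar R}) :=
  forall f : G -> R, Cc f ->
    ((gn n f)%:E) @[n --> \oo] --> (\int[gamma]_x (f x)%:E)%E.

End Defs.

(* Main.v *)
Require Import Defs.
From HB Require Import structures.
From mathcomp Require Import all_boot all_algebra.
From mathcomp Require Import finmap all_classical all_reals all_analysis.
From mathcomp Require Import lra measurable_realfun.
Set Implicit Arguments. Unset Strict Implicit. Unset Printing Implicit Defensive.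
Import mathcomp.order.order.Order.TTheory.
Import GRing.Theory Num.Theory numFieldTopology.Exports numFieldNormedType.Exports.
Local Open Scope classical_set_scope.
Local Open Scope ring_scope.
Section Aux.
Context {R : realType} {G : topologicalZmodType}.
Hypothesis hG : hausdorff_space G.
Hypothesis lcG : locally_compact [set: G].

Lemma bump (t : G) (O : set G) : open O -> O t ->
  exists h : G -> R, [/\ Cc h, forall x, 0 <= h x <= 1, h t = 1 &
     forall x, h x != 0 -> O x].
Proof.
move=> oO Ot.
have [C Ct [cC clC]] := lcG (I : [set: G] t).
rewrite withinET in Ct.
have crs := @locally_compact_completely_regular G R lcG hG.
have clB : closed (~` (O `&` interior C)).
  by apply: open_closedC; apply: openI => //; exact: open_interior.
have nBt : ~ (~` (O `&` interior C)) t by move=> /(_ (conj Ot Ct)).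
have /(@uniform_separatorP _ R) [f [cf f01 f0 f1]] := crs _ _ clB nBt.
exists (fun x => 1 - f x); split.
- split.
    move=> x; apply: continuousB; [exact: cvg_cst|exact: cf].
  exists C; split => // x Cx; apply/eqP; rewrite subr_eq0 eq_sym; apply/eqP.
  apply: f1; exists x => //; move=> [_ /interior_subset]; exact.
- move=> x; have : `[0, 1]%classic (f x) by apply: f01; exists x.
  rewrite /= in_itv /= => /andP [a b]; apply/andP; split; lra.
- by rewrite (f0 (f t)) ?subr0 //; exists t.
- move=> x; rewrite subr_eq0 => /eqP fx.
  apply: contrapT => nO.
  have : f x = 1 by apply: f1; exists x => // -[].
  by move=> h; apply: fx; rewrite h.
Qed.
End Aux.
Section Meas.
Context {R : realType} {G : topologicalZmodType}.

Lemma open_meas (O : set G) : open O -> measurable (O : set (borel G)).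
Proof. by move=> oO; apply: sub_sigma_algebra. Qed.

Lemma cont_meas (h : G -> R) : continuous h ->
  measurable_fun [set: borel G] (EFin \o (h : borel G -> R)).
Proof.
move=> ch; apply/measurable_EFinP.
apply: (measurability _ (RGenOpens.measurableE R)).
move=> _ [_ [a [b ->] <-]]; rewrite setTI.
apply: open_meas; move/continuousP : ch; apply.
exact: interval_open.
Qed.
End Meas.
Section Int.
Context {R : realType} {G : topologicalZmodType}.
Variable gamma : {measure set (borel G) -> \bar R}.
Local Open Scope ereal_scope.

Lemma int_indic (S : set G) : measurable (S : set (borel G)) ->
  gamma S = \int[gamma]_x (\1_S x)%:E.
Proof. by move=> mS; rewrite integral_indic // setIT. Qed.

Lemma meas_indic (S : set G) : measurable (S : set (borel G)) ->
  measurable_fun [set: borel G] (EFin \o (\1_S : borel G -> R)).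
Proof. by move=> mS; apply/measurable_EFinP; exact: measurable_indic. Qed.

Lemma int_le (h : G -> R) (S : set G) : measurable (S : set (borel G)) ->
  continuous h -> (forall x, (0 <= h x <= 1)%R) -> (forall x, h x != 0%R -> S x) ->
  \int[gamma]_x (h x)%:E <= gamma S.
Proof.
move=> mS ch h01 hS; rewrite int_indic //.
apply: ge0_le_integral => //.
- by move=> x _; rewrite lee_fin; case/andP: (h01 x).
- exact: cont_meas.
- exact: meas_indic.
move=> x _; rewrite lee_fin /indic.
have [hx0|/hS Sx] := eqVneq (h x) 0%R.
  by rewrite hx0.
by rewrite mem_set //; case/andP: (h01 x).
Qed.

Lemma int_ge (h : G -> R) (S : set G) (c : R) : measurable (S : set (borel G)) ->
  continuous h -> (0 <= c)%R -> (forall x, (0 <= h x)%R) -> (forall x, S x -> (c <= h x)%R) ->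
  c%:E * gamma S <= \int[gamma]_x (h x)%:E.
Proof.
move=> mS ch c0 h0 hS; rewrite int_indic //.
rewrite -(ge0_integralZl gamma (measurableT) (meas_indic mS)); last 2 first.
- by move=> x _; rewrite lee_fin.
- by rewrite lee_fin.
apply: ge0_le_integral => //.
- by move=> x _; rewrite -EFinM lee_fin mulr_ge0.
- apply: measurable_funeM; exact: meas_indic.
- exact: cont_meas.
move=> x _; rewrite -EFinM lee_fin /indic.
have [Sx|nSx] := pselect (S x).
  by rewrite mem_set // mulr1; exact: hS.
by rewrite memNset // mulr0.
Qed.
End Int.
Section Null.
Context {R : realType} {G : topologicalZmodType}.
Hypothesis hG : hausdorff_space G.
Hypothesis lcG : locally_compact [set: G].
Hypothesis scG : @second_countable G.
Variable gamma : {measure set (borel G) -> \bar R}.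

Lemma null_open (O : set G) : open O ->
  (forall h : G -> R, Cc h -> (forall x, 0 <= h x <= 1) -> (forall x, h x != 0 -> O x) ->
     (\int[gamma]_x (h x)%:E = 0)%E) -> gamma O = 0%E.
Proof.
move=> oO hint.
have key : forall t, O t -> exists V : set G, [/\ open V, V t, V `<=` O & gamma V = 0%E].
  move=> t Ot; have [h [Cch h01 ht hO]] := bump (R:=R) hG lcG oO Ot.
  have ch : continuous h by case: Cch.
  exists [set x | 1/2 < h x]; split.
  - have -> : [set x | 1/2 < h x] = h @^-1` [set y | y \in `]1/2, +oo[] .
      by apply/seteqP; split => x /=; rewrite in_itv /= andbT.
    by move/continuousP : ch; apply; exact: interval_open.
  - by rewrite /= ht; lra.
  - move=> x /= hx; apply: hO; apply/eqP => h0; rewrite h0 in hx; lra.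
  - have mV : measurable ([set x | 1/2 < h x] : set (borel G)).
      have -> : [set x | 1/2 < h x] = h @^-1` [set y | y \in `]1/2, +oo[] .
        by apply/seteqP; split => x /=; rewrite in_itv /= andbT.
      apply: open_meas; move/continuousP : ch; apply; exact: interval_open.
    have := int_ge gamma mV ch (_ : 0 <= 1/2) (fun x => proj1 (andP (h01 x))).
    rewrite hint // => H.
    have {}H := H ltac:(lra) (fun x hx => ltW hx).
    apply/eqP; rewrite eq_le measure_ge0 andbT.
    rewrite -(@lee_pmul2l _ (1/2)%:E) ?mule0 //; rewrite lte_fin; lra.
have [B cB [Bop Bb]] := scG.
pose B' := [set b | B b /\ gamma.-negligible (b : set (borel G))].
have OB : O `<=` \bigcup_(b in B') b.
  move=> t Ot; have [V [oV Vt VO gV]] := key t Ot.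
  have nV : nbhs t V by apply: open_nbhs_nbhs.
  have [U [BU Ut] UV] := Bb t V nV.
  exists U => //; split => //; exists V; split => //; exact: open_meas.
have [f finj] := countable_injP _ cB.
pose F k := \bigcup_(b in [set b | B' b /\ f b = k]) b.
have nF : forall k, gamma.-negligible (F k : set (borel G)).
  move=> k; have [[b0 [B'b0 fb0]]|nb] := pselect (exists b, B' b /\ f b = k).
    apply: (negligibleS _ B'b0.2) => x [b [B'b fb] bx].
    have e : b = b0 by apply: finj; rewrite ?inE; [exact: B'b.1|exact: B'b0.1|rewrite fb fb0].
    by rewrite -e.
  apply: (negligibleS _ (negligible_set0 gamma)) => x [b Bb' _].
  by apply: nb; exists b.
have : gamma.-negligible (O : set (borel G)).
  apply: (negligibleS _ (negligible_bigcup nF)) => x /OB [b B'b bx].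
  by exists (f b) => //; exists b.
by move/measure_negligible; apply; exact: open_meas.
Qed.
End Null.
Definition pG (G : topologicalZmodType) : Type := G.
HB.instance Definition _ (G : topologicalZmodType) := Topological.on (pG G).
HB.instance Definition _ (G : topologicalZmodType) := isPointed.Build (pG G) 0.

Section Fin.
Context {G : topologicalZmodType}.

Lemma cont_subr (c : G) : continuous (fun z : G => z - c).
Proof.
move=> x.
apply: (@continuous_comp _ _ _ (fun z => (z, c)) (fun p : G * G => p.1 - p.2)).
  by apply: cvg_pair; [exact: cvg_id|exact: cvg_cst].
exact: sub_continuous.
Qed.

Lemma cont_rsub (c : G) : continuous (fun z : G => c - z).
Proof.
move=> x.
apply: (@continuous_comp _ _ _ (fun z => (c, z)) (fun p : G * G => p.1 - p.2)).
  by apply: cvg_pair; [exact: cvg_cst|exact: cvg_id].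
exact: sub_continuous.
Qed.

Lemma finite_LK (L K U : set G) (u0 : G) : open U -> U u0 ->
  (forall t x y, L x -> L y -> [set t + u | u in U] x -> [set t + u | u in U] y -> x = y) ->
  compact K -> finite_set (L `&` K).
Proof.
move=> oU Uu0 disc cK.
have cK' : compact (K : set (pG G)) by [].
rewrite compact_cover in cK'.
pose f (a : G) := [set a - u0 + u | u in U].
have fE a : f a = [set z | U (z - (a - u0))].
  apply/seteqP; split => z /=.
    by move=> [u Uu <-]; rewrite addrC addKr.
  by move=> Uz; exists (z - (a - u0)) => //; rewrite addrC subrK.
have fo : forall a, K a -> open (f a).
  move=> a _; rewrite fE.
  by have /continuousP /(_ U oU) := @cont_subr (a - u0).
have Kc : K `<=` cover K f.
  by move=> a Ka; exists a => //; exists u0 => //; rewrite subrK.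
have [D' sD' KD'] := cK' G K f fo Kc.
  apply: (sub_finite_set (B := \bigcup_(a in [set` D']) (L `&` f a))).
    move=> x [Lx Kx]; have [a Da fax] := KD' x Kx; by exists a.
  apply: bigcup_finite; first exact: finite_fset.
  move=> a _.
  have [[x0 [Lx0 fx0]]|nx] := pselect (exists x0, (L `&` f a) x0).
    apply: (sub_finite_set (B := [set x0])); last exact: finite_set1.
    by move=> x [Lx fx] /=; exact: (disc (a - u0) x x0 Lx Lx0 fx fx0).
  apply: (sub_finite_set (B := set0)); last exact: finite_set0.
  by move=> x Lfx; apply: nx; exists x.
Qed.
End Fin.
Section Sums.
Context {R : realType} {G : topologicalZmodType}.

Lemma sum_zero (F : set G) (g : G -> R) :
  (forall x y, F x -> F y -> g (x - y) = 0) ->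
  \sum_(x \in F) \sum_(y \in F) g (x - y) = 0.
Proof.
move=> h; apply: fsbig1 => x Fx; apply: fsbig1 => y Fy; exact: h.
Qed.

Lemma sum_bump (F : set G) (g : G -> R) : finite_set F ->
  (forall x y, F x -> F y -> g (x - y) != 0 -> x = y) -> g 0 = 1 ->
  \sum_(x \in F) \sum_(y \in F) g (x - y) = cardR F.
Proof.
move=> fF h g0.
rewrite (eq_fsbigr (fun _ => 1)); last first.
  move=> x /set_mem Fx.
  rewrite (fsbigD1 x) // subrr g0 fsbig1 /=; first by rewrite addr0.
  move=> y [Fy /= yx].
  have [//|hy] := eqVneq (g (x - y)) 0.
  by case: yx; rewrite (h x y Fx Fy hy).
rewrite fsbig_finite // /cardR.
by rewrite -sum1_size natr_sum.
Qed.
End Sums.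
Section Atom.
Context {R : realType} {G : topologicalZmodType}.
Hypothesis hG : hausdorff_space G.
Hypothesis lcG : locally_compact [set: G].
Hypothesis scG : @second_countable G.

Lemma lim_ev0 (u : nat -> R) (l : \bar R) : (\forall n \near \oo, u n = 0) ->
  (fun n => (u n)%:E) @ \oo --> l -> l = 0%E.
Proof.
move=> ev cv.
have c0 : (fun n => (u n)%:E) @ \oo --> (0%E : \bar R).
  by apply: cvg_near_cst; apply: filterS ev => n ->.
exact: (cvg_unique (@ereal_hausdorff R) cv c0).
Qed.

Lemma closed_meas (C : set G) : closed C -> measurable (C : set (borel G)).
Proof.
move=> cC; rewrite -[C]setCK; apply: measurableC; apply: open_meas.
exact: closed_openC.
Qed.

Lemma all_null (gamma : {measure set (borel G) -> \bar R}) gn :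
  vague_limit gn gamma -> (\forall n \near \oo, forall h, gn n h = 0) ->
  forall B, measurable (B : set (borel G)) -> gamma B = 0%E.
Proof.
move=> vl ev B mB.
have gT : gamma [set: G] = 0%E.
  apply: (null_open hG lcG scG) => //; first exact: openT.
  move=> h Ch _ _; apply: (lim_ev0 _ (vl h Ch)).
  by apply: filterS ev => n; apply.
apply/eqP; rewrite eq_le measure_ge0 andbT -gT.
by apply: le_measure; rewrite ?inE.
Qed.

Variables (W : set G) (g : G -> R).
Hypotheses (oW : open W) (cg : Cc g) (g01 : forall x, 0 <= g x <= 1)
  (g0 : g 0 = 1) (gW : forall x, g x != 0 -> W x).

Lemma atom (gamma : {measure set (borel G) -> \bar R}) gn :
  locally_finite gamma -> vague_limit gn gamma ->
  (forall n h, (forall x, h x != 0 -> W x /\ x <> 0) -> gn n h = 0) ->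
  (gamma ([set 0%R] : set G) = \int[gamma]_x (g x)%:E /\ \int[gamma]_x (g x)%:E \is a fin_num)%E.
Proof.
move=> lf vl hz.
have c1 : closed [set (0 : G)].
  by apply: accessible_closed_set1; exact: hausdorff_accessible.
have oO : open (W `&` ~` [set (0%R:G)]) by apply: openI => //; exact: closed_openC.
have gO : gamma (W `&` ~` [set (0%R:G)]) = 0%E.
  apply: (null_open hG lcG scG) => // h Ch _ hO.
  apply: (lim_ev0 _ (vl h Ch)); apply: nearW => n; apply: hz => x /hO [].
  by [].
have cg' := cg; case: cg' => cgc [K [cK gK]].
have mW := open_meas oW.
have m0 := closed_meas c1.
have mO := open_meas oO.
have le1 : (\int[gamma]_x (g x)%:E <= gamma [set (0%R:G)])%E.
  apply: (le_trans (int_le gamma mW cgc g01 gW)).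
  have sub : W `<=` [set (0%R:G)] `|` (W `&` ~` [set (0%R:G)]).
    move=> x Wx; have [->|x0] := eqVneq x 0; first by left.
    by right; split => //; apply/eqP.
  have Wle : (gamma W <= gamma ([set (0%R:G)] `|` (W `&` ~` [set (0%R:G)])))%E.
    by apply: le_measure => //; rewrite inE //; apply: measurableU.
  apply: (le_trans Wle).
  apply: (le_trans (measureU2 _ _ _)) => //.
  have gO2 : (gamma (W `&` ~` [set (0%R:G)]) <= 0)%E by rewrite gO.
  apply: le_trans (leeD (lexx _) gO2) _.
  by rewrite adde0.
have le2 : (gamma [set (0%R:G)] <= \int[gamma]_x (g x)%:E)%E.
  rewrite -[X in (X <= _)%E]mul1e.
  apply: int_ge => //; first by move=> x; case/andP: (g01 x).
  by move=> x ->; rewrite g0.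
split; first by apply/eqP; rewrite eq_le le1 le2.
have mK : measurable (K : set (borel G)) by apply: closed_meas; exact: compact_closed.
have gK' : forall x, g x != 0 -> K x.
  by move=> x gx; apply: contrapT => nK; move: gx; rewrite gK // eqxx.
rewrite ge0_fin_numE; last by apply: integral_ge0 => x _; rewrite lee_fin; case/andP: (g01 x).
apply: (le_lt_trans (int_le gamma mK cgc g01 gK')).
exact: lf.
Qed.
End Atom.
Theorem lemma3p8 (R : realType) (G : topologicalZmodType)
  (vol : {measure set (borel G) -> \bar R}) (L : set G) (A : nat -> set G) :
  hausdorff_space G -> locally_compact [set: G] -> @second_countable G ->
  haar_measure vol -> uniformly_discrete L -> van_hove vol A ->
  (forall gamma : {measure set (borel G) -> \bar R},
     locally_finite gamma -> vague_limit (gamma_dens vol L A) gamma ->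
     exists d : R,
       (cardR (L `&` A n) / fine (vol (A n))) @[n --> \oo] --> d /\
       gamma ([set 0] : set G) = d%:E) /\
  (forall gamma : {measure set (borel G) -> \bar R},
     locally_finite gamma -> vague_limit (gamma_count L A) gamma ->
     [<-> gamma ([set 0] : set G) = 1%:E;
          exists phi : nat -> nat, (forall k, (phi k < phi k.+1)%N) /\
            (forall k, L `&` A (phi k) !=set0);
          exists N : nat, forall n, (N < n)%N -> L `&` A n !=set0;
          exists B : set G, measurable (B : set (borel G)) /\ gamma B <> 0%E]).
Proof.
move=> hG lcG scG _ [U [oU [u0 Uu0] disc]] [vA _].
have cA n : compact (A n) := (vA n).1.
pose W := [set z : G | U (u0 - z)].
have oW : open W by have /continuousP /(_ U oU) := @cont_rsub G u0.
have W0 : W 0 by rewrite /W /= subr0.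
have disc2 : forall x y, L x -> L y -> W (x - y) -> x = y.
  move=> x y Lx Ly Wxy; apply: (disc (x - u0) x y Lx Ly).
  - by exists u0 => //; rewrite subrK.
  - by exists (u0 - (x - y)) => //; rewrite addrA subrK subKr.
have finF n : finite_set (L `&` A n) := finite_LK oU Uu0 disc (cA n).
have [g [Cg g01 g0 gW]] := bump (R:=R) hG lcG oW W0.
have sg n : \sum_(x \in L `&` A n) \sum_(y \in L `&` A n) g (x - y) = cardR (L `&` A n).
  apply: sum_bump (finF n) _ g0 => x y [Lx _] [Ly _] gne.
  exact: disc2 x y Lx Ly (gW _ gne).
have sh n (h : G -> R) : (forall x, h x != 0 -> W x /\ x <> 0) ->
    \sum_(x \in L `&` A n) \sum_(y \in L `&` A n) h (x - y) = 0.
  move=> hWO; apply: sum_zero => x y [Lx _] [Ly _].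
  have [//|hne] := eqVneq (h (x - y)) 0.
  have [Wxy nz] := hWO _ hne.
  by case: nz; rewrite (disc2 x y Lx Ly Wxy) subrr.
split.
- move=> gamma lf vl.
  have hz : forall n h, (forall x, h x != 0 -> W x /\ x <> 0) ->
      gamma_dens vol L A n h = 0.
    move=> n h hWO; rewrite /gamma_dens.
    by rewrite (sh n h hWO) mul0r.
  have [e0 fin] := atom hG lcG scG oW Cg g01 g0 gW lf vl hz.
  exists (fine (\int[gamma]_x (g x)%:E)%E); split; last by rewrite e0 fineK.
  have cv := vl g Cg; rewrite -(fineK fin) in cv.
  move/fine_cvgP : cv => [_ cv].
  have -> : (fun n => cardR (L `&` A n) / fine (vol (A n))) =
      fine \o (fun n => (gamma_dens vol L A n g)%:E).
    by apply: funext => n /=; rewrite /gamma_dens; rewrite (sg n).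
  exact: cv.
move=> gamma lf vl.
have hz : forall n (h : G -> R), (forall x, h x != 0 -> W x /\ x <> 0) ->
    gamma_count L A n h = 0.
  move=> n h hWO; rewrite /gamma_count; case: asboolP => // _.
  by rewrite (sh n h hWO) mul0r.
have [e0 fin] := atom hG lcG scG oW Cg g01 g0 gW lf vl hz.
have sE n : gamma_count L A n g = if asbool (L `&` A n = set0) then 0 else 1.
  rewrite /gamma_count; case: asboolP => // ne.
  rewrite (sg n).
  rewrite divff //.
  rewrite /cardR pnatr_eq0 cardfs_eq0; apply/negP => /eqP H.
  exact: ne (fset_set_set0 (finF n) H).
have cv := vl g Cg; rewrite -(fineK fin) in cv.
move/fine_cvgP : cv => [_ cv].
set r := fine _ in cv e0.
have half : (0:R) < 1/2 by lra.
have [N0 _ HN] := cvgr_dist_lt _ _ cv _ half.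
have sv n : (fine \o (fun n => (gamma_count L A n g)%:E)) n =
    if asbool (L `&` A n = set0) then 0 else 1 by rewrite /= sE.
have ne0 m : L `&` A m !=set0 -> `[< L `&` A m = set0 >] = false.
  by move=> [x Fx]; apply: asboolF => e; move: Fx; rewrite e.
have e0' m : ~ (L `&` A m !=set0) -> L `&` A m = set0.
  by move=> nm; apply/seteqP; split => // x Fx; apply: nm; exists x.
have [[n1 [n1N F1]]|noF] := pselect (exists n, (N0 <= n)%N /\ L `&` A n !=set0).
  have Hs1 := HN n1 n1N; rewrite /= sE ne0 // in Hs1.
  have allF : forall m, (N0 <= m)%N -> L `&` A m !=set0.
    move=> m mN; apply: contrapT => nm.
    have Hs := HN m mN; rewrite /= sE (asboolT (e0' m nm)) subr0 in Hs.
    move: Hs Hs1; rewrite !ltr_norml => /andP[? ?] /andP[? ?]; lra.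
  have c1 : (fine \o (fun n => (gamma_count L A n g)%:E)) @ \oo --> (1:R).
    apply: cvg_near_cst; near=> m.
    have mN : (N0 <= m)%N by near: m; exact: nbhs_infty_ge.
    by rewrite sv ne0 //; exact: allF.
  have r1 : r = 1 by exact: (cvg_unique (@norm_hausdorff _ R) cv c1).
  have g1 : gamma ([set 0] : set G) = 1%:E.
    by rewrite e0 -(fineK fin) -/r r1.
  tfae.
  - by move=> _; exists (fun k => (k + N0)%N); split => // k; apply: allF; rewrite leq_addl.
  - by move=> _; exists N0 => n /ltnW; exact: allF.
  - move=> _; exists [set (0:G)]; split; last by rewrite g1 => /eqP; rewrite eqe oner_eq0.
    apply: closed_meas; apply: accessible_closed_set1; exact: hausdorff_accessible.
  - by [].
have noF' : forall m, (N0 <= m)%N -> L `&` A m = set0.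
  by move=> m mN; apply: e0' => Fm; apply: noF; exists m.
have z : forall B, measurable (B : set (borel G)) -> gamma B = 0%E.
  apply: (all_null hG lcG scG vl); near=> m => h.
  have mN : (N0 <= m)%N by near: m; exact: nbhs_infty_ge.
  by rewrite /gamma_count asboolT //; exact: noF'.
have f0 : ~ gamma ([set 0] : set G) = 1%:E.
  rewrite z; last first.
    apply: closed_meas; apply: accessible_closed_set1; exact: hausdorff_accessible.
  move=> H; have : ((0 : \bar R) < 1%:E)%E by rewrite lte_fin ltr01.
  by rewrite -H ltxx.
have f1 : ~ exists phi : nat -> nat, (forall k, (phi k < phi k.+1)%N) /\
            (forall k, L `&` A (phi k) !=set0).
  move=> [phi [inc ne]].
  have ge : forall k, (k <= phi k)%N.
    elim=> [|k IH] //; exact: leq_ltn_trans IH (inc k).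
  by have := ne N0; rewrite noF' ?ge // => -[x []].
have f2 : ~ exists N : nat, forall n, (N < n)%N -> L `&` A n !=set0.
  move=> [N HNn]; have := HNn (maxn N N0).+1.
  rewrite ltnS leq_maxl => /(_ isT); rewrite noF' //.
    by case=> x [].
  by rewrite (leq_trans (leq_maxr N N0)).
have f3 : ~ exists B : set G, measurable (B : set (borel G)) /\ gamma B <> 0%E.
  by move=> [B [mB]]; rewrite z.
by tfae => // [/f0|/f1|/f2|/f3].
Unshelve. all: by end_near.
Qed.
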